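(* Let $2\le d\le D$ be integers and let $g:(1,\infty)\to(0,\infty)$ be non-decreasing with $$d\,g(x)\le g\!\left(\tfrac{d^2}{d-1}x\right)\quad\text{and}\quad g\!\left(\tfrac{D^2}{D-1}x\right)\le D\,g(x)\quad\text{for all }x.$$ Then there exist a sequence $\bar d\in\{d,D\}^{\mathbb N}$ and a constant $C\ge1$ such that $\frac1C g(x)\le h_{\bar d}(x)\le C g(x)$ for all $x>1$.
   Context: For a sequence $\bar d=(d_i)_{i\ge0}$ of integers $\ge2$, $p_i=\frac{d_i-1}{d_i^2}$. For real $x>1$, $k(x)$ is the unique integer $k\ge0$ with $\frac{1}{p_0\cdots p_{k}}\ge x>\frac{1}{p_0\cdots p_{k-1}}$ (empty product $=1$), and $h_{\bar d}(x)=d_0d_1\cdots d_{k(x)}$. *)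

(* Defs.v *)
From Stdlib Require Import Reals Lra Lia ClassicalEpsilon.
Open Scope R_scope.

Definition pp (ds : nat -> nat) (i : nat) : R :=
  (INR (ds i) - 1) / (INR (ds i))^2.

Fixpoint prodp (ds : nat -> nat) (n : nat) : R :=
  match n with
  | O => 1
  | S m => prodp ds m * pp ds m
  end.

Fixpoint prodd (ds : nat -> nat) (n : nat) : R :=
  match n with
  | O => 1
  | S m => prodd ds m * INR (ds m)
  end.

Definition is_kx (ds : nat -> nat) (x : R) (k : nat) : Prop :=
  x <= / prodp ds (S k) /\ / prodp ds k < x.

(* k(x): the (unique, when d_i >= 2 and x > 1) k with is_kx; chosen by epsilon *)
Definition kx (ds : nat -> nat) (x : R) : nat :=
  epsilon (inhabits 0%nat) (fun k => is_kx ds x k).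

Definition h (ds : nat -> nat) (x : R) : R := prodd ds (S (kx ds x)).

(* Main.v *)
Require Import Defs.
From Stdlib Require Import Reals Lra Lia ClassicalEpsilon.
Open Scope R_scope.

Definition qq (c : nat) : R := (INR c)^2 / (INR c - 1).

Lemma qq_ge4 c : (2 <= c)%nat -> 4 <= qq c.
Proof.
  intro Hc. apply le_INR in Hc. simpl in Hc. unfold qq.
  apply Rmult_le_reg_r with (INR c - 1). lra.
  unfold Rdiv. rewrite Rmult_assoc, Rinv_l by lra. nra.
Qed.

Lemma qq_mono c e : (2 <= c)%nat -> (c <= e)%nat -> qq c <= qq e.
Proof.
  intros Hc He. apply le_INR in Hc. apply le_INR in He. simpl in Hc.
  assert (Hid : qq e - qq c = (INR e - INR c) * ((INR c - 1) * (INR e - 1) - 1)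
      / ((INR c - 1) * (INR e - 1))).
  { unfold qq. field. lra. }
  assert (0 <= (INR e - INR c) * ((INR c - 1) * (INR e - 1) - 1)
      / ((INR c - 1) * (INR e - 1))).
  { unfold Rdiv. apply Rmult_le_pos. apply Rmult_le_pos; nra.
    left. apply Rinv_0_lt_compat. nra. }
  lra.
Qed.

Lemma pp_pos ds i : (2 <= ds i)%nat -> 0 < pp ds i.
Proof.
  intro H. apply le_INR in H. simpl in H. unfold pp.
  apply Rdiv_lt_0_compat; nra.
Qed.

Lemma prodp_pos ds n : (forall i, (2 <= ds i)%nat) -> 0 < prodp ds n.
Proof.
  intro H. induction n; simpl. lra. apply Rmult_lt_0_compat; auto. apply pp_pos; auto.
Qed.

Lemma Q_succ ds n : (forall i, (2 <= ds i)%nat) ->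
  / prodp ds (S n) = / prodp ds n * qq (ds n).
Proof.
  intro H. simpl. pose proof (prodp_pos ds n H). pose proof (H n) as Hn.
  apply le_INR in Hn. simpl in Hn. unfold pp, qq. field. split; lra.
Qed.

Lemma Q_ge ds n : (forall i, (2 <= ds i)%nat) -> 1 + INR n <= / prodp ds n.
Proof.
  intro H. induction n.
  - simpl. rewrite Rinv_1. lra.
  - rewrite Q_succ by auto. rewrite S_INR. pose proof (qq_ge4 _ (H n)). pose proof (pos_INR n).
    assert (0 <= / prodp ds n - 1 - INR n) by lra. nra.
Qed.

Lemma exists_k ds x : (forall i, (2 <= ds i)%nat) -> 1 < x -> exists k, is_kx ds x k.
Proof.
  intros H Hx.
  assert (Hn : forall n, x <= / prodp ds n -> exists k, is_kx ds x k).
  { induction n; intro Hle.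
    - simpl in Hle. rewrite Rinv_1 in Hle. lra.
    - destruct (Rle_dec x (/ prodp ds n)) as [h|h]. auto.
      exists n. split; lra. }
  destruct (INR_unbounded x) as [n Hn0].
  apply (Hn n). pose proof (Q_ge ds n H). lra.
Qed.

Lemma kx_spec ds x : (forall i, (2 <= ds i)%nat) -> 1 < x -> is_kx ds x (kx ds x).
Proof.
  intros H Hx. unfold kx. apply epsilon_spec. apply exists_k; auto.
Qed.

Definition choose (g : R -> R) (d D : nat) (H Q : R) : nat :=
  if Rle_dec (g Q) H then d else D.

Fixpoint st g d D n : R * R :=
  match n with
  | O => (INR d, qq d)
  | S m => let p := st g d D m in let c := choose g d D (fst p) (snd p) in
           (fst p * INR c, snd p * qq c)
  end.

Definition dsq g d D n : nat :=
  match n with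
  | O => d
  | S m => choose g d D (fst (st g d D m)) (snd (st g d D m))
  end.

Lemma dsq_val g d D i : dsq g d D i = d \/ dsq g d D i = D.
Proof.
  destruct i; simpl; auto. unfold choose. destruct Rle_dec; auto.
Qed.

Lemma link g d D n : (2 <= d)%nat -> (2 <= D)%nat ->
  prodd (dsq g d D) (S n) = fst (st g d D n) /\
  / prodp (dsq g d D) (S n) = snd (st g d D n).
Proof.
  intros hd hD.
  assert (H2 : forall i, (2 <= dsq g d D i)%nat).
  { intro i. destruct (dsq_val g d D i) as [e|e]; rewrite e; auto. }
  induction n.
  - split. simpl. ring. rewrite Q_succ by auto. simpl. rewrite Rinv_1. ring.
  - destruct IHn as [I1 I2]. split.
    + change (prodd (dsq g d D) (S (S n))) with
        (prodd (dsq g d D) (S n) * INR (dsq g d D (S n))). rewrite I1. reflexivity.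
    + rewrite Q_succ by auto. rewrite I2. reflexivity.
Qed.

Theorem mainTheorem9 (d D : nat) (g : R -> R)
  (hd : (2 <= d)%nat) (hdD : (d <= D)%nat)
  (gpos : forall x, 1 < x -> 0 < g x)
  (gmono : forall x y, 1 < x -> x <= y -> g x <= g y)
  (glow : forall x, 1 < x ->
     INR d * g x <= g ((INR d)^2 / (INR d - 1) * x))
  (gup : forall x, 1 < x ->
     g ((INR D)^2 / (INR D - 1) * x) <= INR D * g x) :
  exists (ds : nat -> nat) (C : R),
    (forall i, ds i = d \/ ds i = D) /\ 1 <= C /\
    forall x, 1 < x -> / C * g x <= h ds x /\ h ds x <= C * g x.
Proof.
  assert (hD : (2 <= D)%nat) by lia.
  set (ds := dsq g d D).
  assert (H2 : forall i, (2 <= ds i)%nat).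
  { intro i. destruct (dsq_val g d D i) as [e|e]; unfold ds; rewrite e; auto. }
  set (d' := INR d). set (D' := INR D).
  assert (Hd' : 2 <= d') by (apply le_INR in hd; exact hd).
  assert (HdD' : d' <= D') by (apply le_INR; exact hdD).
  set (a := qq d). set (A := qq D).
  assert (Ha : 4 <= a) by (apply qq_ge4; auto).
  assert (HaA : a <= A) by (apply qq_mono; auto).
  assert (glow' : forall x, 1 < x -> d' * g x <= g (x * a)).
  { intros x hx. rewrite (Rmult_comm x a). unfold a, qq, d'. apply glow; auto. }
  assert (gup' : forall x, 1 < x -> g (x * A) <= D' * g x).
  { intros x hx. rewrite (Rmult_comm x A). unfold A, qq, D'. apply gup; auto. }
  assert (gaQ : forall x, 1 < x -> g (x * a) <= D' * g x).
  { intros x hx. eapply Rle_trans; [|apply gup'; auto]. apply gmono; nra. }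
  assert (gAQ : forall x, 1 < x -> d' * g x <= g (x * A)).
  { intros x hx. eapply Rle_trans; [apply glow'; auto|]. apply gmono; nra. }
  assert (ga : 0 < g a) by (apply gpos; lra).
  assert (gA : 0 < g A) by (apply gpos; lra).
  set (L := Rmin (d' / g a) (d' / D')).
  set (U := Rmax (d' / g a) (D' / d')).
  assert (HL : 0 < L).
  { unfold L. apply Rmin_glb_lt; apply Rdiv_lt_0_compat; lra. }
  assert (HLD : L * D' <= d').
  { assert (L <= d' / D') by apply Rmin_r.
    apply Rmult_le_compat_r with (r := D') in H; [|lra].
    unfold Rdiv in H. rewrite Rmult_assoc, Rinv_l in H; lra. }
  assert (HUd : D' <= U * d').
  { assert (D' / d' <= U) by apply Rmax_r.
    apply Rmult_le_compat_r with (r := d') in H; [|lra].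
    unfold Rdiv in H. rewrite Rmult_assoc, Rinv_l in H; lra. }
  assert (HU0 : 0 <= U).
  { assert (D' / d' <= U) by apply Rmax_r.
    assert (0 < D' / d') by (apply Rdiv_lt_0_compat; lra). lra. }
  set (Q := fun n => / prodp ds n). set (H := fun n => prodd ds n).
  assert (QS : forall n, 1 < Q (S n)).
  { intro n. unfold Q. pose proof (Q_ge ds (S n) H2). rewrite S_INR in H0.
    pose proof (pos_INR n). lra. }
  assert (Inv : forall n, L * g (Q (S n)) <= H (S n) <= U * g (Q (S n))).
  { induction n.
    - unfold Q, H. destruct (link g d D 0 hd hD) as [E1 E2].
      fold ds in E1, E2. rewrite E1, E2. simpl. fold d' a.
      split.
      + assert (L <= d' / g a) by apply Rmin_l.
        apply Rmult_le_compat_r with (r := g a) in H0; [|lra].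
        unfold Rdiv in H0. rewrite Rmult_assoc, Rinv_l in H0; lra.
      + assert (d' / g a <= U) by apply Rmax_l.
        apply Rmult_le_compat_r with (r := g a) in H0; [|lra].
        unfold Rdiv in H0. rewrite Rmult_assoc, Rinv_l in H0; lra.
    - destruct IHn as [I1 I2].
      assert (EH : H (S (S n)) = H (S n) * INR (ds (S n))) by reflexivity.
      assert (EQ : Q (S (S n)) = Q (S n) * qq (ds (S n))).
      { unfold Q. apply Q_succ; auto. }
      assert (Ec : ds (S n) = choose g d D (H (S n)) (Q (S n))).
      { destruct (link g d D n hd hD) as [E1 E2]. fold ds in E1, E2.
        unfold H, Q. rewrite E1, E2. reflexivity. }
      pose proof (QS n) as Q1. pose proof (gpos _ Q1) as gQ.
      rewrite EH, EQ, Ec. unfold choose.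
      destruct (Rle_dec (g (Q (S n))) (H (S n))) as [c|c].
      + fold d' a. pose proof (glow' _ Q1). pose proof (gaQ _ Q1). split; nra.
      + fold D' A. pose proof (gup' _ Q1). pose proof (gAQ _ Q1). split; nra. }
  set (C := Rmax (Rmax 1 (g a / d')) (Rmax (d' * D' / g A) (Rmax (/ L) (D' * U)))).
  assert (C1 : 1 <= C) by (unfold C; eapply Rle_trans; [apply Rmax_l|]; apply Rmax_l).
  assert (C2 : g a / d' <= C) by (unfold C; eapply Rle_trans; [apply Rmax_r|]; apply Rmax_l).
  assert (C3 : d' * D' / g A <= C) by (unfold C; eapply Rle_trans; [apply Rmax_l|]; apply Rmax_r).
  assert (C4 : / L <= C).
  { unfold C. eapply Rle_trans; [|apply Rmax_r]. eapply Rle_trans; [|apply Rmax_r]. apply Rmax_l. }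
  assert (C5 : D' * U <= C).
  { unfold C. eapply Rle_trans; [|apply Rmax_r]. eapply Rle_trans; [|apply Rmax_r]. apply Rmax_r. }
  exists ds, C. split. { intro i. apply dsq_val. } split. exact C1.
  intros x hx.
  pose proof (gpos _ hx) as gx.
  assert (K : g x <= C * h ds x /\ h ds x <= C * g x).
  2:{ split; [|tauto]. destruct K as [K _].
      apply Rmult_le_reg_l with C. lra. rewrite <- Rmult_assoc, Rinv_r by lra. lra. }
  destruct (kx_spec ds x H2 hx) as [k1 k2]. unfold h.
  destruct (kx ds x) as [|m] eqn:Ek.
  - simpl. fold d'. rewrite Rmult_1_l.
    assert (Ex : / prodp ds 1 = a).
    { rewrite Q_succ by auto. simpl. rewrite Rinv_1, Rmult_1_l. reflexivity. }
    rewrite Ex in k1.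
    assert (g x <= g a) by (apply gmono; auto).
    assert (g A <= D' * g x).
    { eapply Rle_trans; [|apply gup'; auto]. apply gmono. lra. nra. }
    split.
    + apply Rmult_le_compat_r with (r := d') in C2; [|lra].
      unfold Rdiv in C2. rewrite Rmult_assoc, Rinv_l in C2; lra.
    + apply Rmult_le_compat_r with (r := g x) in C3; [|lra].
      assert (d' <= d' * D' / g A * g x).
      { unfold Rdiv. rewrite (Rmult_comm (d' * D')), Rmult_assoc, Rmult_assoc.
        apply Rmult_le_reg_l with (g A). lra.
        rewrite <- Rmult_assoc, Rinv_r by lra. nra. }
      lra.
  - fold (H (S (S m))). fold (Q (S (S m))) in k1. fold (Q (S m)) in k2.
    destruct (Inv m) as [_ I2]. destruct (Inv (S m)) as [I3 _].
    pose proof (QS m).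
    assert (g x <= g (Q (S (S m)))) by (apply gmono; auto).
    assert (g (Q (S m)) <= g x) by (apply gmono; lra).
    assert (EH : H (S (S m)) = H (S m) * INR (ds (S m))) by reflexivity.
    assert (Hds : INR (ds (S m)) <= D').
    { destruct (dsq_val g d D (S m)) as [e|e]; unfold ds; rewrite e; fold d' D'; lra. }
    assert (HH0 : 0 <= H (S m)).
    { pose proof (gpos _ (QS m)). destruct (Inv m) as [I1 _].
      assert (0 <= L * g (Q (S m))) by nra. lra. }
    split.
    + assert (g x <= / L * H (S (S m))).
      { apply Rmult_le_reg_l with L. auto. rewrite <- Rmult_assoc, Rinv_r by lra. nra. }
      assert (0 <= H (S (S m))).
      { rewrite EH. apply Rmult_le_pos; auto. apply pos_INR. }
      assert (/ L * H (S (S m)) <= C * H (S (S m))) by (apply Rmult_le_compat_r; auto).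
      lra.
    + rewrite EH.
      assert (H (S m) * INR (ds (S m)) <= H (S m) * D') by (apply Rmult_le_compat_l; auto).
      assert (H (S m) * D' <= U * g (Q (S m)) * D') by (apply Rmult_le_compat_r; lra).
      assert (U * g (Q (S m)) <= U * g x) by (apply Rmult_le_compat_l; auto).
      assert (U * g (Q (S m)) * D' <= U * g x * D') by (apply Rmult_le_compat_r; lra).
      assert (D' * U * g x <= C * g x) by (apply Rmult_le_compat_r; lra).
      lra.
Qed.
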